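(* Let $K$ be a field of odd characteristic $p$ with algebraic closure $\bar K$. Suppose that $f\in K[X]$ satisfies $f\sim_{\bar K} X^p-2X^{(p+1)/2}+X$. Then $f\sim_K X^p-2aX^{(p+1)/2}+a^2X$ for some $a\in K$.
   Context: For a field extension $E$ of $K$ and $f,h\in K[X]$ (or $h\in E[X]$), write $f\sim_E h$ if there are polynomials $L,R\in E[X]$ of degree $1$ with $f(X)=L(h(R(X)))$. *)

(* Defs.v *)
From HB Require Import structures.
From mathcomp Require Import all_boot all_order all_algebra.
Set Implicit Arguments. Unset Strict Implicit. Unset Printing Implicit Defensive.
Import GRing.Theory.
Local Open Scope ring_scope.

Definition lin_equiv (E : fieldType) (f h : {poly E}) : Prop :=
  exists L R : {poly E},
    [/\ size L = 2%N, size R = 2%N & f = L \Po (h \Po R)].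

Definition pfam (E : fieldType) (p : nat) (a : E) : {poly E} :=
  'X^p - (2 * a) *: 'X^(p.+1./2) + (a ^+ 2) *: 'X.

(* Main.v *)
Require Import Defs.
From HB Require Import structures.
From mathcomp Require Import all_boot all_order all_algebra.
From mathcomp Require Import ring zify.
Import GRing.Theory.
Local Open Scope ring_scope.

Lemma coefXaddCn (R : comNzRingType) (c : R) n k :
  (('X + c%:P) ^+ n)`_k = c ^+ (n - k) *+ 'C(n, k).
Proof.
elim: n k => [|n IH] k.
  by rewrite expr0 coef1; case: k.
rewrite exprS mulrDl coefD coefXM coefCM.
case: k => [|k] /=.
  by rewrite IH !bin0 !subn0 !mulr1n add0r exprS.
rewrite !IH binS addnC mulrnDr subSS; congr (_ + _).
case: (ltnP k n) => hk.
  by rewrite mulrnAr -exprS subnSK.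
by rewrite bin_small ?mulr0n ?mulrn0 ?mulr0.

Qed.

Lemma size2E (R : nzRingType) (q : {poly R}) : size q = 2%N ->
  q = q`_1 *: 'X + (q`_0)%:P /\ q`_1 != 0.
Proof.
move=> hs; split.
  apply/polyP => i; rewrite coefD coefZ coefX coefC.
  case: i => [|[|i]] /=; rewrite ?mulr0 ?mulr1 ?add0r ?addr0 //.
  by rewrite nth_default // hs.
have : lead_coef q != 0 by rewrite lead_coef_eq0 -size_poly_eq0 hs.
by rewrite lead_coefE hs.
Qed.

Lemma size_lin (R : nzRingType) (a b : R) : a != 0 -> size (a *: 'X + b%:P) = 2%N.
Proof.
move=> ha; rewrite -mul_polyC size_MXaddC polyC_eq0 (negbTE ha) /=.
by rewrite size_polyC ha.
Qed.

Lemma comp_polyN' (R : comNzRingType) (q r : {poly R}) : (- q) \Po r = - (q \Po r).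
Proof. exact: linearN. Qed.

Theorem lemma2p9 (K : fieldType) (p : nat) (L : closedFieldType)
    (iota : {rmorphism K -> L}) :
  p \in [pchar K] -> odd p ->
  (forall x : L, exists2 q : {poly K}, q != 0 & root (map_poly iota q) x) ->
  forall f : {poly K},
    lin_equiv (map_poly iota f) (pfam p (1 : L)) ->
    exists a : K, lin_equiv f (pfam p a).
Proof.
move=> pK oddp _ f [L1 [R1 [sL sR eF]]].
have pr := pcharf_prime pK.
set m := p./2.
have pE : p = m.*2.+1 by rewrite /m -{1}(odd_double_half p) oddp.
have hm1 : (p.+1)./2 = m.+1 by rewrite pE -doubleS doubleK.
have m0 : (0 < m)%N.
  have := prime_gt1 pr; rewrite pE; case: (m) => //.
have pL : (p%:R : L) = 0 by rewrite -(rmorph_nat iota) pcharf0 // rmorph0.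
have mK : (m%:R : K) != 0.
  rewrite -(dvdn_pcharf pK) gtnNdvd // pE; lia.
have mL : (m%:R : L) != 0 by rewrite -(rmorph_nat iota) fmorph_eq0.
have [eL l1n] := size2E _ _ sL; have [eR r1n] := size2E _ _ sR.
rewrite {}eL {}eR in eF; clear sL sR.
move: (L1`_1) (L1`_0) (R1`_1) (R1`_0) l1n r1n eF => l1 l0 r1 r0 l1n r1n eF.
clear L1 R1.
set F := map_poly iota f in eF.
set c := r0 / r1.
set t := r1 ^+ m.
set A := l1 * (r1 * t).
set B := l1 * r1.
have rp : r1 ^+ p = r1 * t ^+ 2 by rewrite pE exprS -mul2n mulnC exprM /t.
have rm1 : r1 ^+ m.+1 = r1 * t by rewrite exprS.
set H := (l1 * r1 ^+ p) *: 'X^p - (2 * A) *: 'X^(m.+1) + B *: 'X.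
have eFH : F = H \Po ('X + c%:P) + l0%:P.
  rewrite eF /pfam hm1.
  have -> : r1 *: 'X + r0%:P = r1 *: ('X + c%:P).
    by rewrite scalerDr scale_polyC /c mulrC divfK.
  rewrite /H !comp_polyD !(comp_polyN', comp_polyZ, comp_polyX, comp_polyC, comp_Xn_poly).
  rewrite !exprZn.
  rewrite !scalerDr !scalerN !scalerA expr1n !mulr1 /A rm1 mulrCA.
  by have -> : r1 * (l1 * 2 * t) = 2 * (l1 * (r1 * t)) by ring.
have two : (2 * (m.+1)%:R : L) = 1.
  by rewrite -natrM mul2n doubleS -pE -addn1 natrD pL add0r.
have eD : F^`() = B%:P - A *: ('X + c%:P)^+m.
  rewrite eFH derivD derivC addr0 deriv_comp.
  rewrite (_ : ('X + c%:P)^`() = 1) ?mulr1; last by rewrite derivD derivC addr0 derivX.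
  rewrite /H.
  rewrite !derivD derivN !derivZ !derivXn derivX.
  rewrite -!scaler_nat !scalerA pL mulr0 scale0r add0r.
  rewrite -(mulrC A 2) -mulrA two mulr1 /=.
  rewrite comp_polyD comp_polyN' !comp_polyZ comp_Xn_poly -polyC1 comp_polyC polyC1 alg_polyC addrC //.
have l1r1 : r1 * t != 0 by rewrite mulf_neq0 // expf_neq0.
have An : A != 0 by rewrite mulf_neq0.
have Bn : B != 0 by rewrite mulf_neq0.
have cm : (F^`())`_m = - A.
  rewrite eD coefB coefC coefZ coefXaddCn subnn binn expr0 mulr1n mulr1.
  by rewrite (negbTE (lt0n_neq0 m0)) sub0r.
have cm1 : (F^`())`_(m.-1) = (m.-1 == 0)%N%:R * B - A * (c *+ m).
  rewrite eD coefB coefC coefZ coefXaddCn -subn1 bin_sub // bin1 subKn //.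
  by case: (m - 1 == 0)%N; rewrite ?mulr1 ?mul1r ?mul0r.
have cp : F`_p = l1 * r1 ^+ p.
  rewrite eFH coefD coefC pE /= addr0 /H.
  rewrite !comp_polyD comp_polyN' !(comp_polyZ, comp_Xn_poly, comp_polyX).
  rewrite !(coefD, coefN, coefZ, coefXaddCn, coefX, coefC) -pE subnn binn.
  rewrite (bin_small (_ : m.+1 < p)%N); last by lia.
  have -> : (p == 1%N) = false by apply/negbTE; rewrite pE; lia.
  have -> : (p == 0%N) = false by rewrite pE.
  by rewrite expr0 mulr1n mulr1 mulr0n mulr0 subr0 add0r mulr0 addr0.
have ceval : F.[-c] = l0.
  rewrite eFH hornerD hornerC horner_comp !hornerE.
  by rewrite addNr !expr0n pE /= !mulr0 subr0 !addr0 add0r.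
have dmap : F^`() = map_poly iota (f^`()) by rewrite deriv_map.
set AK := - (f^`())`_m.
have eA : iota AK = A by rewrite rmorphN -coef_map -dmap cm opprK.
set fp := f`_p.
have efp : iota fp = l1 * r1 ^+ p by rewrite -coef_map cp.
set BK := AK ^+ 2 / fp.
have eB : iota BK = B.
  rewrite fmorph_div rmorphXn eA efp /A /B rp; field.
  by rewrite l1n r1n expf_neq0.
set cK := ((m.-1 == 0)%N%:R * BK - (f^`())`_(m.-1)) / (AK * m%:R).
have ec : iota cK = c.
  rewrite fmorph_div rmorphB rmorphM !rmorph_nat eB -coef_map -dmap cm1 rmorphM eA rmorph_nat.
  rewrite -mulr_natr; field.
  by rewrite mL An.
set l0K := f.[- cK].
have el0 : iota l0K = l0 by rewrite -horner_map rmorphN ec.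
have lamn : AK ^+ 2 / BK != 0.
  by rewrite -(fmorph_eq0 iota) fmorph_div rmorphXn eA eB mulf_neq0 ?invr_eq0 ?expf_neq0.
clearbody AK BK cK l0K.
have eLp : map_poly iota ((AK ^+ 2 / BK) *: 'X + l0K%:P) = (A ^+ 2 / B) *: 'X + l0%:P.
  by rewrite rmorphD /= map_polyZ map_polyX map_polyC /= fmorph_div rmorphXn eA eB el0.
have eRp : map_poly iota ('X + cK%:P) = 'X + c%:P by rewrite map_polyXaddC ec.
have ePp : map_poly iota (pfam p (BK / AK)) = pfam p (B / A).
  rewrite /pfam !rmorphD ?rmorphB ?rmorphN /= !map_polyZ !map_polyXn !map_polyX /=.
  by rewrite !rmorphM !fmorphV rmorph_nat eA eB expr2.
exists (BK / AK), ((AK ^+ 2 / BK) *: 'X + l0K%:P), ('X + cK%:P).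
split; [exact: (@size_lin _ _ _ lamn) | exact: size_XaddC |].
apply: (map_poly_inj iota); rewrite !map_comp_poly eLp eRp ePp.
rewrite -/F eFH [in RHS]comp_polyD [in RHS]comp_polyC [in RHS]comp_polyZ [in RHS]comp_polyX -[in RHS]comp_polyZ.
congr (_ \Po _ + _).
rewrite /pfam hm1 /H !scalerDr scalerN !scalerA.
congr (_ *: _ - _ *: _ + _ *: _); rewrite /A /B ?rp; field; by rewrite ?l1n ?r1n ?expf_neq0.
Qed.
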